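(* Let $U,U'\in\mathcal G$ be distant, let $\lambda:U\to U'$ be a $K$-linear isomorphism, and let $R=\operatorname{End}_K(U)$. For $(x,y)\in Z^2\setminus\{(0,0)\}$ put $T^{(x,y)}:=\{xu+yu^\lambda\mid u\in U\}$. Then the set $\{T^{(x,y)}\mid (x,y)\in Z^2\setminus\{(0,0)\}\}$ is, on the one hand, the image under $\Phi$ of a $Z$-chain of $\mathbb P(R)$ and, on the other hand, a $Z$-regulus.
   Context: $K$ is a (not necessarily commutative) field with centre $Z$, and $V$ is a left vector space over $K$ of arbitrary (possibly infinite) dimension with $\dim V>2$. $\mathcal G:=\{X\le V\mid X\cong V/X\}$, assumed nonempty. Points are $1$-dimensional and lines $2$-dimensional subspaces; two subspaces meet if they have a common point. $X,Y\in\mathcal G$ are distant if $V=X\oplus Y$. A $Z$-regulus is a subset $\mathcal R\subseteq\mathcal G$ such that (R1) its elements are mutually distant and $|\mathcal R|\ge3$; (R2) if a line meets three mutually distinct elements of $\mathcal R$ then it meets all elements of $\mathcal R$; (R3) $\mathcal R$ is not properly contained in any subset of $\mathcal G$ satisfying (R1) and (R2). Maps are written as exponents on the right, $u^{\beta\lambda}=(u^\beta)^\lambda$. For a ring $S$ with $1$, $\mathrm{GL}(2,S)$ acts on the free left module $S^2$ (row vectors, multiplied by matrices on the right) and on its submodules; the projective line $\mathbb P(S)$ is the orbit of $S(1,0)$ under $\mathrm{GL}(2,S)$. With $R=\operatorname{End}_K(U)$, the field $Z$ is embedded in $R$ via $a\mapsto a\cdot\mathrm{id}_U$; this yields an embedding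 $\mathbb P(Z)\to\mathbb P(R)$, $Z(x,y)\mapsto R(x\cdot\mathrm{id},y\cdot\mathrm{id})$, and the $Z$-chains of $\mathbb P(R)$ are the images of (the embedded) $\mathbb P(Z)$ under $\mathrm{GL}(2,R)$. The map $\Phi:\mathbb P(R)\to\mathcal G$, $R(\alpha,\beta)\mapsto\{u^\alpha+u^{\beta\lambda}\mid u\in U\}$, is a well-defined bijection. *)

(* Defs.v *)
(* Subsets of V are predicates
   V -> Prop.  Maps are written as ordinary functions: the paper's u^f is
   [f u] here, and the paper's product  f g  in End(U) ("first f, then g")
   is [rmul f g = fun v => g (f v)]. *)
From HB Require Import structures.
From mathcomp Require Import all_boot all_order all_algebra.
Set Implicit Arguments. Unset Strict Implicit. Unset Printing Implicit Defensive.
Import GRing.Theory.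
Local Open Scope ring_scope.

Section Defs.
Variables (K : unitRingType) (V : lmodType K).

Definition division_ring := forall a : K, a != 0 -> a \is a GRing.unit.

Definition central (z : K) := forall k : K, z * k = k * z.

Definition dim_gt2 :=
  exists v1 v2 v3 : V, forall a b c : K,
    a *: v1 + b *: v2 + c *: v3 = 0 -> [/\ a = 0, b = 0 & c = 0].

Definition subspace (X : V -> Prop) :=
  [/\ X 0, (forall u w, X u -> X w -> X (u + w)) &
      (forall (a : K) u, X u -> X (a *: u))].

(* the coset v + X, an element of V/X; V/X is the set of these cosets,
   with (v + X) + (w + X) = (v + w) + X and a(v + X) = av + X *)
Definition coset (X : V -> Prop) (v : V) : V -> Prop := fun w => X (w - v).

(* X is isomorphic to V/X: there is a K-linear bijection X -> V/X.
   Such a map is written x |-> coset X (f x) for a representative map f. *)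
Definition iso_quot (X : V -> Prop) :=
  exists f : V -> V,
    [/\ (forall x y, X x -> X y -> coset X (f (x + y)) = coset X (f x + f y)),
        (forall (a : K) x, X x -> coset X (f (a *: x)) = coset X (a *: f x)),
        (forall x y, X x -> X y -> coset X (f x) = coset X (f y) -> x = y) &
        (forall v, exists x, X x /\ coset X (f x) = coset X v)].

Definition inG (X : V -> Prop) := subspace X /\ iso_quot X.

Definition distant (X Y : V -> Prop) :=
  (forall v, X v -> Y v -> v = 0) /\
  (forall v, exists x y, [/\ X x, Y y & v = x + y]).

Definition line (L : V -> Prop) :=
  exists p q : V,
    (forall a b : K, a *: p + b *: q = 0 -> a = 0 /\ b = 0) /\
    L = (fun w => exists a b : K, w = a *: p + b *: q).

Definition meet (X Y : V -> Prop) := exists v, [/\ v != 0, X v & Y v].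

Definition R1 (S : (V -> Prop) -> Prop) :=
  (forall X Y, S X -> S Y -> X <> Y -> distant X Y) /\
  (exists X Y W, [/\ S X, S Y, S W & [/\ X <> Y, Y <> W & X <> W]]).

Definition R2 (S : (V -> Prop) -> Prop) :=
  forall L, line L ->
    (exists X Y W, [/\ S X, S Y, S W, [/\ X <> Y, Y <> W & X <> W] &
                       [/\ meet L X, meet L Y & meet L W]]) ->
    forall X, S X -> meet L X.

Definition regulus (S : (V -> Prop) -> Prop) :=
  [/\ (forall X, S X -> inG X), R1 S, R2 S &
      ~ (exists S' : (V -> Prop) -> Prop,
           [/\ (forall X, S' X -> inG X), R1 S', R2 S',
               (forall X, S X -> S' X) & exists X, S' X /\ ~ S X])].

Definition lin_iso (U U' : V -> Prop) (lam : V -> V) :=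
  [/\ (forall u, U u -> U' (lam u)),
      (forall u w, U u -> U w -> lam (u + w) = lam u + lam w),
      (forall (a : K) u, U u -> lam (a *: u) = a *: lam u),
      (forall u w, U u -> U w -> lam u = lam w -> u = w) &
      (forall u', U' u' -> exists u, U u /\ lam u = u')].

(* ---- the ring R = End_K(U), represented by maps V -> V, considered on U ---- *)
Definition endo (U : V -> Prop) (f : V -> V) :=
  [/\ (forall u, U u -> U (f u)),
      (forall u w, U u -> U w -> f (u + w) = f u + f w) &
      (forall (a : K) u, U u -> f (a *: u) = a *: f u)].

Definition req (U : V -> Prop) (f g : V -> V) := forall u, U u -> f u = g u.

Definition radd (f g : V -> V) : V -> V := fun v => f v + g v.
Definition rmul (f g : V -> V) : V -> V := fun v => g (f v).
Definition rone : V -> V := fun v => v.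
Definition rzero : V -> V := fun _ => 0.
Definition rscal (a : K) : V -> V := fun v => a *: v.

Record mx2 := Mx2 { m11 : V -> V; m12 : V -> V; m21 : V -> V; m22 : V -> V }.

Definition mx2_endo U (M : mx2) :=
  [/\ endo U (m11 M), endo U (m12 M), endo U (m21 M) & endo U (m22 M)].

Definition mx2_mul (M N : mx2) : mx2 :=
  Mx2 (radd (rmul (m11 M) (m11 N)) (rmul (m12 M) (m21 N)))
      (radd (rmul (m11 M) (m12 N)) (rmul (m12 M) (m22 N)))
      (radd (rmul (m21 M) (m11 N)) (rmul (m22 M) (m21 N)))
      (radd (rmul (m21 M) (m12 N)) (rmul (m22 M) (m22 N))).

Definition mx2_eq U (M N : mx2) :=
  [/\ req U (m11 M) (m11 N), req U (m12 M) (m12 N),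
      req U (m21 M) (m21 N) & req U (m22 M) (m22 N)].

Definition mx2_one : mx2 := Mx2 rone rzero rzero rone.

Definition GL2 U (M : mx2) :=
  mx2_endo U M /\
  exists N, [/\ mx2_endo U N, mx2_eq U (mx2_mul M N) mx2_one &
                mx2_eq U (mx2_mul N M) mx2_one].

Definition rowmul (a b : V -> V) (M : mx2) : (V -> V) * (V -> V) :=
  (radd (rmul a (m11 M)) (rmul b (m21 M)),
   radd (rmul a (m12 M)) (rmul b (m22 M))).

(* Phi (R(alpha, beta)) = { u^alpha + u^(beta lam) | u in U } *)
Definition Phi (U : V -> Prop) (lam : V -> V) (p : (V -> V) * (V -> V)) : V -> Prop :=
  fun w => exists u, U u /\ w = p.1 u + lam (p.2 u).

(* The Z-chain with matrix M is { R(x id, y id) M | (x,y) in Z^2 \ {(0,0)} }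
   = { R((x id, y id) M) }; its image under Phi: *)
Definition Phi_zchain (U : V -> Prop) (lam : V -> V) (M : mx2) : (V -> Prop) -> Prop :=
  fun X => exists x y : K,
    [/\ central x, central y, ~ (x = 0 /\ y = 0) &
        X = Phi U lam (rowmul (rscal x) (rscal y) M)].

Definition Tset (U : V -> Prop) (lam : V -> V) (x y : K) : V -> Prop :=
  fun w => exists u, U u /\ w = x *: u + y *: lam u.

End Defs.

(* Main.v *)
Require Import Defs.
From HB Require Import structures.
From mathcomp Require Import all_boot all_order all_algebra.
From Stdlib Require Import FunctionalExtensionality PropExtensionality ClassicalEpsilon Classical.
Set Implicit Arguments. Unset Strict Implicit. Unset Printing Implicit Defensive.
Import GRing.Theory.
Local Open Scope ring_scope.

Lemma pred_ext (T : Type) (P Q : T -> Prop) : (forall v, P v <-> Q v) -> P = Q.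
Proof.
move=> H; apply: functional_extensionality => v; apply: propositional_extensionality; exact: H.
Qed.

Lemma grp_id (V : zmodType) (a b c d e f : V) : a + b + (c + d) - (a + e) - (b + f) = (c - e) + (d - f).
Proof.
rewrite -addrA -opprD [(a + e) + _]addrACA opprD addrACA subrr add0r.
by rewrite opprD addrACA.
Qed.

Section Main.
Variables (K : unitRingType) (V : lmodType K).
Hypothesis HK : division_ring K.

Lemma sub_opp (S : V -> Prop) : subspace S -> forall u, S u -> S (- u).
Proof. by case=> _ _ Hs u Hu; rewrite -scaleN1r; apply: Hs. Qed.

Lemma sub_sub (S : V -> Prop) : subspace S -> forall u w, S u -> S w -> S (u - w).
Proof. move=> Hs u w Hu Hw; case: (Hs) => _ Ha _; apply: Ha => //; exact: sub_opp. Qed.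

Lemma sub0 (S : V -> Prop) : subspace S -> S 0.
Proof. by case. Qed.

Lemma subD (S : V -> Prop) : subspace S -> forall u w, S u -> S w -> S (u + w).
Proof. by case. Qed.

Lemma subZ (S : V -> Prop) : subspace S -> forall a u, S u -> S (a *: u).
Proof. by case. Qed.

Lemma unitK (a : K) : a != 0 -> a^-1 * a = 1.
Proof. by move=> /HK; apply: mulVr. Qed.

Lemma unitKr (a : K) : a != 0 -> a * a^-1 = 1.
Proof. by move=> /HK; apply: mulrV. Qed.

Lemma scale_eq0 (a : K) (v : V) : a != 0 -> a *: v = 0 -> v = 0.
Proof. by move=> Ha Hv; rewrite -[v]scale1r -(unitK Ha) -scalerA Hv scaler0. Qed.

Lemma scale_inv (a : K) (v : V) : a != 0 -> a^-1 *: (a *: v) = v.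
Proof. by move=> Ha; rewrite scalerA unitK // scale1r. Qed.

Lemma scale_invr (a : K) (v : V) : a != 0 -> a *: (a^-1 *: v) = v.
Proof. by move=> Ha; rewrite scalerA unitKr // scale1r. Qed.

Lemma one_neq0 : (1 : K) != 0. Proof. exact: oner_neq0. Qed.

Variables (U U' : V -> Prop) (sU : subspace U) (sU' : subspace U')
  (HUU' : distant U U') (lam : V -> V) (Hlam : lin_iso U U' lam).

Lemma dir0 a b : U a -> U' b -> a + b = 0 -> a = 0 /\ b = 0.
Proof.
move=> Ha Hb E.
have Ea : a = - b by apply/eqP; rewrite -subr_eq0 opprK E.
have a0 : a = 0 by apply: HUU'.1 => //; rewrite Ea; apply: sub_opp.
by split=> //; move: E; rewrite a0 add0r.
Qed.

Lemma decomp_uniq a b a' b' : U a -> U' b -> U a' -> U' b' ->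
  a + b = a' + b' -> a = a' /\ b = b'.
Proof.
move=> Ha Hb Ha' Hb' E.
have [h1 h2] : a - a' = 0 /\ b - b' = 0.
  apply: dir0; [exact: (sub_sub sU)|exact: (sub_sub sU')|].
  by rewrite addrACA E addrACA !subrr addr0.
by split; apply/eqP; rewrite -subr_eq0; apply/eqP.
Qed.

Lemma lamU u : U u -> U' (lam u). Proof. by case: Hlam => H _ _ _ _; apply: H. Qed.
Lemma lamD u w : U u -> U w -> lam (u + w) = lam u + lam w. Proof. by case: Hlam => _ H _ _ _; apply: H. Qed.
Lemma lamZ a u : U u -> lam (a *: u) = a *: lam u. Proof. by case: Hlam => _ _ H _ _; apply: H. Qed.
Lemma lam_inj u w : U u -> U w -> lam u = lam w -> u = w. Proof. by case: Hlam => _ _ _ H _; apply: H. Qed.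
Lemma lam_onto w : U' w -> exists u, U u /\ lam u = w. Proof. by case: Hlam => _ _ _ _; apply. Qed.

Lemma lam0 : lam 0 = 0.
Proof. by have := lamZ 0 (sub0 sU); rewrite !scale0r. Qed.

Lemma lamN u : U u -> lam (- u) = - lam u.
Proof. by move=> Hu; rewrite -scaleN1r lamZ // scaleN1r. Qed.

Lemma lamB u w : U u -> U w -> lam (u - w) = lam u - lam w.
Proof. by move=> Hu Hw; rewrite lamD ?lamN //; apply: sub_opp. Qed.

Lemma lam_nz u : U u -> u != 0 -> lam u != 0.
Proof.
move=> Hu Hn; apply/eqP => E; move/eqP: Hn; apply.
by apply: lam_inj => //; [exact: sub0 | rewrite E lam0].
Qed.

Lemma T_nz x y u : U u -> u != 0 -> ~ (x = 0 /\ y = 0) -> x *: u + y *: lam u != 0.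
Proof.
move=> Hu Hn Hxy; apply/eqP => E.
have [e1 e2] := dir0 (subZ sU x Hu) (subZ sU' y (lamU Hu)) E.
case: (eqVneq x 0) => [x0|xn].
  case: (eqVneq y 0) => [y0|yn]; first by apply: Hxy.
  by move: (scale_eq0 yn e2); apply/eqP; apply: lam_nz.
by move: (scale_eq0 xn e1); apply/eqP.
Qed.

Lemma Tset_sub x y : central x -> central y -> subspace (Tset U lam x y).
Proof.
move=> cx cy; split.
- exists 0; split; first exact: sub0.
  by rewrite lam0 !scaler0 addr0.
- move=> v w [u [Hu ->]] [u' [Hu' ->]]; exists (u + u'); split; first exact: subD.
  by rewrite lamD // !scalerDr addrACA.
- move=> a v [u [Hu ->]]; exists (a *: u); split; first exact: subZ.
  by rewrite lamZ // scalerDr !scalerA cx cy.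
Qed.

Lemma Tset_mem x y u : U u -> Tset U lam x y (x *: u + y *: lam u).
Proof. by move=> Hu; exists u. Qed.

Lemma Tset10 : Tset U lam 1 0 = U.
Proof.
apply: pred_ext => v; split.
  by case=> u [Hu ->]; rewrite scale1r scale0r addr0.
by move=> Hv; exists v; split=> //; rewrite scale1r scale0r addr0.
Qed.

Lemma Tset01 : Tset U lam 0 1 = U'.
Proof.
apply: pred_ext => v; split.
  by case=> u [Hu ->]; rewrite scale1r scale0r add0r; apply: lamU.
move=> Hv; have [u [Hu E]] := lam_onto Hv.
by exists u; split=> //; rewrite scale1r scale0r add0r.
Qed.

Lemma scale_comm (c d : K) (z : V) : central c -> c *: (d *: z) = d *: (c *: z).
Proof. by move=> cc; rewrite !scalerA cc. Qed.

Lemma Tset_scale x y c : central x -> central y -> c != 0 ->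
  Tset U lam (c * x) (c * y) = Tset U lam x y.
Proof.
move=> cx cy cn; apply: pred_ext => v; split.
  case=> u [Hu ->]; exists (c *: u); split; first exact: subZ.
  by rewrite lamZ // -(cx c) -(cy c) -!scalerA.
case=> u [Hu ->]; exists (c^-1 *: u); split; first exact: subZ.
by rewrite lamZ // -(cx c) -(cy c) -!scalerA !scale_invr.
Qed.

Lemma Tset_prop x y x' y' : central x -> central y -> central x' -> central y' ->
  ~ (x = 0 /\ y = 0) -> ~ (x' = 0 /\ y' = 0) -> x * y' = y * x' ->
  Tset U lam x' y' = Tset U lam x y.
Proof.
move=> cx cy cx' cy' nxy nxy' E.
suff [c [cn -> ->]] : exists c, [/\ c != 0, x' = c * x & y' = c * y].
  exact: Tset_scale.
case: (eqVneq x 0) => [x0|xn].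
  have yn : y != 0 by apply/eqP => y0; apply: nxy.
  have x'0 : x' = 0.
    move: E; rewrite x0 mul0r => /esym E.
    by rewrite -[x']mul1r -(unitK yn) -mulrA E mulr0.
  exists (y' * y^-1); split.
  - apply/eqP => c0; apply: nxy'; split=> //.
    by rewrite -[y']mulr1 -(unitK yn) mulrA c0 mul0r.
  - by rewrite x0 x'0 mulr0.
  - by rewrite -mulrA unitK // mulr1.
exists (x' * x^-1); split.
- apply/eqP => c0; apply: nxy'; split.
    by rewrite -[x']mulr1 -(unitK xn) mulrA c0 mul0r.
  rewrite -[y']mul1r -(unitK xn) -mulrA E (cy x') mulrA.
  by rewrite -(cx' x^-1) c0 mul0r.
- by rewrite -mulrA unitK // mulr1.
- rewrite (cx' x^-1) -mulrA -(cy x') -E mulrA unitK //.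
  by rewrite mul1r.
Qed.

Lemma Tset_dist x y x' y' : central x -> central y -> central x' -> central y' ->
  x * y' != y * x' -> distant (Tset U lam x y) (Tset U lam x' y').
Proof.
move=> cx cy cx' cy' HD.
have Dn : x * y' - y * x' != 0 by rewrite subr_eq0.
split.
  move=> v [u [Hu ->]] [w [Hw E]].
  have [e1 e2] := decomp_uniq (subZ sU x Hu) (subZ sU' y (lamU Hu))
                    (subZ sU x' Hw) (subZ sU' y' (lamU Hw)) E.
  have e3 : y *: u = y' *: w.
    by apply: lam_inj; [exact: subZ|exact: subZ|rewrite !lamZ].
  suff u0 : u = 0 by rewrite u0 lam0 !scaler0 addr0.
  apply: (scale_eq0 Dn).
  rewrite scalerBl (cx y') (cy x') -!scalerA e1 e3 !scalerA (cy' x').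
  by rewrite subrr.
move=> v; have [a [b [Ha Hb ->]]] := HUU'.2 v.
have [u2 [Hu2 <-]] := lam_onto Hb.
set D := x * y' - y * x'.
set u := D^-1 *: (y' *: a - x' *: u2).
set w := D^-1 *: (x *: u2 - y *: a).
have Hu : U u by rewrite /u; apply: (subZ sU); apply: (sub_sub sU); apply: (subZ sU).
have Hw : U w by rewrite /w; apply: (subZ sU); apply: (sub_sub sU); apply: (subZ sU).
have E1 : x *: u + x' *: w = a.
  rewrite /u /w !(scale_comm _ _ cx) !(scale_comm _ _ cx') -scalerDr.
  rewrite !scalerBr !scalerA (cx x') addrA subrK -scalerBl.
  by rewrite -(cy x') /D scale_inv.
have E2 : y *: u + y' *: w = u2.
  rewrite /u /w !(scale_comm _ _ cy) !(scale_comm _ _ cy') -scalerDr.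
  rewrite !scalerBr !scalerA (cy y') addrC addrA subrK -scalerBl.
  by rewrite (cy' x) /D scale_inv.
exists (x *: u + y *: lam u), (x' *: w + y' *: lam w); split.
- exact: Tset_mem.
- exact: Tset_mem.
- rewrite -!lamZ // addrACA E1 -lamD; try exact: subZ.
  by rewrite E2.
Qed.

Lemma iso_lemma (X Y : V -> Prop) (g : V -> V) : subspace X -> subspace Y -> distant X Y ->
  (forall v, X v -> Y (g v)) -> (forall a b, X a -> X b -> g (a + b) = g a + g b) ->
  (forall k a, X a -> g (k *: a) = k *: g a) ->
  (forall a b, X a -> X b -> g a = g b -> a = b) ->
  (forall w, Y w -> exists a, X a /\ g a = w) -> iso_quot X.
Proof.
move=> sX sY dXY gY gD gZ gI gS; exists g; split.
- by move=> a b Ha Hb; rewrite gD.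
- by move=> k a Ha; rewrite gZ.
- move=> a b Ha Hb E; apply: gI => //.
  have : coset X (g b) (g a) by rewrite -E /coset subrr; exact: sub0.
  rewrite /coset => H.
  apply/eqP; rewrite -subr_eq0; apply/eqP; apply: dXY.1 => //.
  by apply: (sub_sub sY); apply: gY.
- move=> v; have [x0 [y0 [Hx0 Hy0 ->]]] := dXY.2 v.
  have [a [Ha Ea]] := gS _ Hy0; exists a; split=> //.
  rewrite Ea; apply: pred_ext => w; rewrite /coset; split => H.
    by rewrite [x0 + y0]addrC opprD addrA; apply: (sub_sub sX).
  have -> : w - y0 = (w - (x0 + y0)) + x0 by rewrite [x0 + y0]addrC opprD addrA subrK.
  by apply: (subD sX).
Qed.

Lemma proj_exists : exists p1 : V -> V, forall v, U (p1 v) /\ U' (v - p1 v).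
Proof.
have H : forall v, exists a, U a /\ U' (v - a).
  move=> v; have [a [b [Ha Hb ->]]] := HUU'.2 v.
  by exists a; split=> //; rewrite addrC addKr.
exists (fun v => proj1_sig (constructive_indefinite_description _ (H v))).
by move=> v; case: (constructive_indefinite_description _ (H v)).
Qed.

Lemma Tset_inG (HU' : inG U') x y : central x -> central y -> ~ (x = 0 /\ y = 0) ->
  inG (Tset U lam x y).
Proof.
move=> cx cy nxy.
case: (eqVneq x 0) => [x0|xn].
  have yn : y != 0 by apply/eqP => y0; apply: nxy.
  have c0 : central (0 : K) by move=> k; rewrite mul0r mulr0.
  have c1 : central (1 : K) by move=> k; rewrite mul1r mulr1.
  have h1 : ~ ((0 : K) = 0 /\ (1 : K) = 0) by case=> _ /eqP; rewrite oner_eq0.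
  have h2 : (0 : K) * y = 1 * x by rewrite x0 mul0r mul1r.
  by rewrite (@Tset_prop 0 1 x y c0 c1 cx cy h1 nxy h2) Tset01.
split; first exact: Tset_sub.
have [p1 Hp1] := proj_exists.
pose g v := lam (x^-1 *: p1 v).
have gX : forall u, U u -> g (x *: u + y *: lam u) = lam u.
  move=> u Hu; rewrite /g.
  set v := x *: u + y *: lam u.
  have Ed : p1 v + (v - p1 v) = x *: u + y *: lam u by rewrite addrC subrK.
  have [e1 _] := decomp_uniq (Hp1 v).1 (Hp1 v).2 (subZ sU x Hu) (subZ sU' y (lamU Hu)) Ed.
  by rewrite e1 scale_inv.
apply: (@iso_lemma _ U' g).
- exact: Tset_sub.
- exact: sU'.
- split.
    move=> v [u [Hu ->]] Hv.
    have Hxu : U' (x *: u).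
      by have := sub_sub sU' Hv (subZ sU' y (lamU Hu)); rewrite addrK.
    have xu0 : x *: u = 0 by apply: HUU'.1 => //; exact: subZ.
    by rewrite (scale_eq0 xn xu0) lam0 !scaler0 addr0.
  move=> v; have [a [b [Ha Hb ->]]] := HUU'.2 v.
  have Hu : U (x^-1 *: a) by exact: subZ.
  exists (x *: (x^-1 *: a) + y *: lam (x^-1 *: a)), (b - y *: lam (x^-1 *: a)).
  split; first exact: Tset_mem.
    by apply: (sub_sub sU') => //; apply: (subZ sU'); apply: lamU.
  by rewrite scale_invr // -addrA; congr (_ + _); rewrite addrC subrK.
- by move=> v [u [Hu ->]]; rewrite gX //; apply: lamU.
- move=> a b [u [Hu ->]] [w [Hw ->]].
  have -> : x *: u + y *: lam u + (x *: w + y *: lam w) = x *: (u + w) + y *: lam (u + w).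
    by rewrite lamD // !scalerDr addrACA.
  rewrite !gX //; [exact: lamD | exact: subD].
- move=> k a [u [Hu ->]].
  have -> : k *: (x *: u + y *: lam u) = x *: (k *: u) + y *: lam (k *: u).
    by rewrite lamZ // scalerDr !scalerA (cx k) (cy k).
  rewrite !gX //; [exact: lamZ | exact: subZ].
- move=> a b [u [Hu ->]] [w [Hw ->]]; rewrite !gX // => E.
  by rewrite (lam_inj Hu Hw E).
- move=> w Hw; have [u [Hu <-]] := lam_onto Hw.
  by exists (x *: u + y *: lam u); split; [exact: Tset_mem | exact: gX].
Qed.

Definition sp2 (w1 w2 v : V) := exists a b : K, v = a *: w1 + b *: w2.

Lemma sp2D w1 w2 v v' : sp2 w1 w2 v -> sp2 w1 w2 v' -> sp2 w1 w2 (v + v').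
Proof.
move=> [a [b ->]] [a' [b' ->]]; exists (a + a'), (b + b').
by rewrite !scalerDl addrACA.
Qed.

Lemma sp2Z w1 w2 k v : sp2 w1 w2 v -> sp2 w1 w2 (k *: v).
Proof.
move=> [a [b ->]]; exists (k * a), (k * b).
by rewrite scalerDr !scalerA.
Qed.

Lemma sp2B w1 w2 v v' : sp2 w1 w2 v -> sp2 w1 w2 v' -> sp2 w1 w2 (v - v').
Proof. by move=> h h'; apply: sp2D => //; rewrite -scaleN1r; apply: sp2Z. Qed.

Lemma sp2_1 w1 w2 : sp2 w1 w2 w1.
Proof. by exists 1, 0; rewrite scale1r scale0r addr0. Qed.

Lemma sp2_2 w1 w2 : sp2 w1 w2 w2.
Proof. by exists 0, 1; rewrite scale1r scale0r add0r. Qed.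

Lemma span2_aux (p q w1 w2 : V) s1 t1 s2 t2 : s1 != 0 ->
  w1 = s1 *: p + t1 *: q -> w2 = s2 *: p + t2 *: q ->
  (forall a b, a *: w1 + b *: w2 = 0 -> a = 0 /\ b = 0) ->
  sp2 w1 w2 p /\ sp2 w1 w2 q.
Proof.
move=> s1n E1 E2 ind.
set c := s2 * s1^-1.
set d := t2 - c * t1.
have Ed : w2 - c *: w1 = d *: q.
  rewrite E1 E2 scalerDr !scalerA /c -mulrA unitK // mulr1 scalerBl.
  by rewrite opprD addrACA subrr add0r.
have dn : d != 0.
  apply/eqP => d0; have := ind (- c) 1.
  rewrite scale1r scaleNr addrC Ed d0 scale0r => /(_ erefl) [_ /eqP].
  by rewrite oner_eq0.
have Hq : sp2 w1 w2 q.
  have -> : q = d^-1 *: (w2 - c *: w1) by rewrite Ed scale_inv.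
  by apply: sp2Z; apply: sp2B; [exact: sp2_2 | apply: sp2Z; exact: sp2_1].
split=> //.
have -> : p = s1^-1 *: (w1 - t1 *: q) by rewrite E1 addrK scale_inv.
by apply: sp2Z; apply: sp2B; [exact: sp2_1 | exact: sp2Z].
Qed.

Lemma span2 (p q w1 w2 w3 : V) :
  (exists s t, w1 = s *: p + t *: q) -> (exists s t, w2 = s *: p + t *: q) ->
  (exists s t, w3 = s *: p + t *: q) ->
  (forall a b, a *: w1 + b *: w2 = 0 -> a = 0 /\ b = 0) ->
  sp2 w1 w2 w3.
Proof.
move=> [s1 [t1 E1]] [s2 [t2 E2]] [s3 [t3 ->]] ind.
suff [Hp Hq] : sp2 w1 w2 p /\ sp2 w1 w2 q by apply: sp2D; apply: sp2Z.
case: (eqVneq s1 0) => [s10|s1n]; last exact: span2_aux E1 E2 ind.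
case: (eqVneq t1 0) => [t10|t1n].
  have := ind 1 0; rewrite E1 s10 t10 !scale0r !(addr0, scaler0) => /(_ erefl) [/eqP].
  by rewrite oner_eq0.
have [Hq Hp] := span2_aux t1n (etrans E1 (addrC _ _)) (etrans E2 (addrC _ _)) ind.
by split.
Qed.

Definition Tfam (X : V -> Prop) :=
  exists x y : K, [/\ central x, central y, ~ (x = 0 /\ y = 0) & X = Tset U lam x y].

Lemma scale_eq0l (a : K) (v : V) : v != 0 -> a *: v = 0 -> a = 0.
Proof.
move=> vn E; apply/eqP; apply/negPn/negP => an.
by move/eqP: vn; apply; apply: (scale_eq0 an).
Qed.

Lemma Tneq_det x1 y1 x2 y2 : central x1 -> central y1 -> central x2 -> central y2 ->
  ~ (x1 = 0 /\ y1 = 0) -> ~ (x2 = 0 /\ y2 = 0) ->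
  Tset U lam x1 y1 <> Tset U lam x2 y2 -> x1 * y2 != y1 * x2.
Proof.
move=> c1 c2 c3 c4 n1 n2 ne; apply/eqP => E; apply: ne.
by rewrite (Tset_prop c1 c2 c3 c4 n1 n2 E).
Qed.

Lemma Tmem_nz x y w : central x -> central y -> ~ (x = 0 /\ y = 0) ->
  Tset U lam x y w -> w != 0 -> exists u, [/\ U u, u != 0 & w = x *: u + y *: lam u].
Proof.
move=> cx cy nxy [u [Hu E]] wn; exists u; split=> //.
by apply/eqP => u0; move: wn; rewrite E u0 lam0 !scaler0 addr0 eqxx.
Qed.

Lemma R2_T : R2 Tfam.
Proof.
move=> L [p [q [_ ->]]].
move=> [X1 [X2 [X3 [[x1 [y1 [cx1 cy1 n1 ->]]] [x2 [y2 [cx2 cy2 n2 ->]]] [x3 [y3 [cx3 cy3 n3 ->]]]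
   [n12 n23 n13] [m1 m2 m3]]]]] X [x [y [cx cy nxy ->]]].
change (meet (sp2 p q) (Tset U lam x y)).
case: m1 => w1 [w1n Lw1 Tw1]; case: m2 => w2 [w2n Lw2 Tw2]; case: m3 => w3 [w3n Lw3 Tw3].
have d12 := Tneq_det cx1 cy1 cx2 cy2 n1 n2 n12.
have d23 := Tneq_det cx2 cy2 cx3 cy3 n2 n3 n23.
have d13 := Tneq_det cx1 cy1 cx3 cy3 n1 n3 n13.
have ind : forall a b, a *: w1 + b *: w2 = 0 -> a = 0 /\ b = 0.
  move=> a b E.
  have E' : a *: w1 = - (b *: w2) by apply/eqP; rewrite -subr_eq0 opprK E.
  have aw : a *: w1 = 0.
    apply: (Tset_dist cx1 cy1 cx2 cy2 d12).1.
      exact: (subZ (Tset_sub cx1 cy1)).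
    by rewrite E'; apply: (sub_opp (Tset_sub cx2 cy2)); apply: (subZ (Tset_sub cx2 cy2)).
  have a0 := scale_eq0l w1n aw.
  split=> //; apply: (scale_eq0l w2n).
  by move: E; rewrite a0 scale0r add0r.
have [a [b E3]] := span2 Lw1 Lw2 Lw3 ind.
have [u1 [Hu1 _ Ew1]] := Tmem_nz cx1 cy1 n1 Tw1 w1n.
have [u2 [Hu2 _ Ew2]] := Tmem_nz cx2 cy2 n2 Tw2 w2n.
have [u3 [Hu3 u3n Ew3]] := Tmem_nz cx3 cy3 n3 Tw3 w3n.
have [A [HA aw1]] : exists A, U A /\ a *: w1 = x1 *: A + y1 *: lam A.
  exists (a *: u1); split; first exact: subZ.
  by rewrite Ew1 lamZ // scalerDr !(scale_comm _ _ cx1) !(scale_comm _ _ cy1).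
have [B [HB bw2]] : exists B, U B /\ b *: w2 = x2 *: B + y2 *: lam B.
  exists (b *: u2); split; first exact: subZ.
  by rewrite Ew2 lamZ // scalerDr !(scale_comm _ _ cx2) !(scale_comm _ _ cy2).
have E : x3 *: u3 + y3 *: lam u3 = (x1 *: A + x2 *: B) + lam (y1 *: A + y2 *: B).
  by rewrite -Ew3 E3 aw1 bw2 lamD ?lamZ //; [rewrite addrACA | exact: subZ | exact: subZ].
have [e1 e2] := decomp_uniq (subZ sU x3 Hu3) (subZ sU' y3 (lamU Hu3))
  (subD sU (subZ sU x1 HA) (subZ sU x2 HB)) (lamU (subD sU (subZ sU y1 HA) (subZ sU y2 HB))) E.
have e2' : y3 *: u3 = y1 *: A + y2 *: B.
  apply: lam_inj; [exact: (subZ sU) | exact: (subD sU (subZ sU y1 HA) (subZ sU y2 HB)) | by rewrite lamZ].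
set D := x1 * y2 - y1 * x2.
have Dn : D != 0 by rewrite subr_eq0.
have EA : (y2 * x3 - x2 * y3) *: u3 = D *: A.
  rewrite scalerBl -!scalerA e1 e2' !scalerDr !scalerA (cx2 y2) addrAC.
  rewrite opprD addrA subrK /D scalerBl (cx1 y2) (cy1 x2) //.
have EB : (x1 * y3 - y1 * x3) *: u3 = D *: B.
  rewrite scalerBl -!scalerA e1 e2' !scalerDr !scalerA (cx1 y1).
  rewrite opprD addrACA subrr add0r /D scalerBl //.
have eAn : y2 * x3 - x2 * y3 != 0 by rewrite subr_eq0 eq_sym.
have eBn : x1 * y3 - y1 * x3 != 0 by rewrite subr_eq0.
have LQ1 : sp2 p q (x1 *: u3 + y1 *: lam u3).
  have H : (y2 * x3 - x2 * y3) *: (x1 *: u3 + y1 *: lam u3) = D *: (a *: w1).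
    rewrite scalerDr -(scale_comm _ _ cx1) -(scale_comm _ _ cy1) -lamZ // EA lamZ //.
    by rewrite aw1 scalerDr -(scale_comm _ _ cx1) -(scale_comm _ _ cy1).
  have -> : x1 *: u3 + y1 *: lam u3 = (y2 * x3 - x2 * y3)^-1 *: (D *: (a *: w1)).
    by rewrite -H scale_inv.
  by do 3 apply: sp2Z.
have LQ2 : sp2 p q (x2 *: u3 + y2 *: lam u3).
  have H : (x1 * y3 - y1 * x3) *: (x2 *: u3 + y2 *: lam u3) = D *: (b *: w2).
    rewrite scalerDr -(scale_comm _ _ cx2) -(scale_comm _ _ cy2) -lamZ // EB lamZ //.
    by rewrite bw2 scalerDr -(scale_comm _ _ cx2) -(scale_comm _ _ cy2).
  have -> : x2 *: u3 + y2 *: lam u3 = (x1 * y3 - y1 * x3)^-1 *: (D *: (b *: w2)).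
    by rewrite -H scale_inv.
  by do 3 apply: sp2Z.
have Lu3 : sp2 p q u3.
  have H : y2 *: (x1 *: u3 + y1 *: lam u3) - y1 *: (x2 *: u3 + y2 *: lam u3) = D *: u3.
    rewrite !scalerDr !scalerA opprD addrACA (cy1 y2) subrr addr0 -scalerBl.
    by rewrite /D (cx1 y2).
  have -> : u3 = D^-1 *: (y2 *: (x1 *: u3 + y1 *: lam u3) - y1 *: (x2 *: u3 + y2 *: lam u3)).
    by rewrite H scale_inv.
  by apply: sp2Z; apply: sp2B; apply: sp2Z.
have Llu3 : sp2 p q (lam u3).
  have H : x1 *: (x2 *: u3 + y2 *: lam u3) - x2 *: (x1 *: u3 + y1 *: lam u3) = D *: lam u3.
    rewrite !scalerDr !scalerA opprD addrACA (cx1 x2) subrr add0r -scalerBl.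
    by rewrite /D (cy1 x2).
  have -> : lam u3 = D^-1 *: (x1 *: (x2 *: u3 + y2 *: lam u3) - x2 *: (x1 *: u3 + y1 *: lam u3)).
    by rewrite H scale_inv.
  by apply: sp2Z; apply: sp2B; apply: sp2Z.
exists (x *: u3 + y *: lam u3); split.
- exact: T_nz.
- by apply: sp2D; apply: sp2Z.
- exact: Tset_mem.
Qed.

Definition indep (p q : V) := forall a b : K, a *: p + b *: q = 0 -> a = 0 /\ b = 0.

Lemma dep_or_indep p q : indep p q \/ exists a b : K, a *: p + b *: q = 0 /\ ~ (a = 0 /\ b = 0).
Proof.
case: (classic (indep p q)) => [h|h]; [by left|right].
apply: NNPP => nE; apply: h => a b E; apply: NNPP => nab.
by apply: nE; exists a, b.
Qed.

Lemma indep_nz p q : indep p q -> p != 0 /\ q != 0.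
Proof.
move=> h; split; apply/eqP => E.
  by move: (h 1 0); rewrite E scaler0 scale0r addr0 => /(_ erefl) [/eqP]; rewrite oner_eq0.
by move: (h 0 1); rewrite E scaler0 scale0r addr0 => /(_ erefl) [_ /eqP]; rewrite oner_eq0.
Qed.

Lemma indep_U (HdimV : dim_gt2 V) : exists p q, [/\ U p, U q & indep p q].
Proof.
apply: NNPP => nE.
have H : forall p q, U p -> U q -> exists a b : K, a *: p + b *: q = 0 /\ ~ (a = 0 /\ b = 0).
  move=> p q Hp Hq; case: (dep_or_indep p q) => // h.
  by case: nE; exists p, q.
case: HdimV => v1 [v2 [v3 Hv]].
have [u0 [Hu0 u0n]] : exists u0, U u0 /\ u0 != 0.
  apply: NNPP => nU.
  have U0 : forall u, U u -> u = 0.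
    move=> u Hu; apply: NNPP => un; apply: nU; exists u; split=> //; exact/eqP.
  have v10 : v1 = 0.
    have [a [b [Ha Hb ->]]] := HUU'.2 v1.
    have [u [Hu <-]] := lam_onto Hb.
    by rewrite (U0 _ Ha) (U0 _ Hu) lam0 addr0.
  by move: (Hv 1 0 0); rewrite v10 scaler0 !scale0r !addr0 => /(_ erefl) [/eqP]; rewrite oner_eq0.
have sp0 : forall u, U u -> exists k : K, u = k *: u0.
  move=> u Hu; have [a [b [E nab]]] := H u0 u Hu0 Hu.
  case: (eqVneq b 0) => [b0|bn].
    have a0 : a = 0 by apply: (scale_eq0l u0n); move: E; rewrite b0 scale0r addr0.
    by case: nab.
  exists (- (b^-1 * a)).
  have E' : b *: u = - (a *: u0) by apply/eqP; rewrite -subr_eq0 opprK addrC E.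
  by rewrite scaleNr -scalerA -scalerN -E' scale_inv.
have spv : forall v, exists s t : K, v = s *: u0 + t *: lam u0.
  move=> v; have [a [b [Ha Hb ->]]] := HUU'.2 v.
  have [u [Hu <-]] := lam_onto Hb.
  have [s ->] := sp0 _ Ha; have [t ->] := sp0 _ Hu.
  by exists s, t; rewrite lamZ.
case: (dep_or_indep v1 v2) => [h|[a [b [E nab]]]].
  have [a [b E]] := span2 (spv v1) (spv v2) (spv v3) h.
  have := Hv a b (-1); rewrite scaleN1r E addrN => /(_ erefl) [_ _ /eqP].
  by rewrite oppr_eq0 oner_eq0.
have [a0 b0 _] : [/\ a = 0, b = 0 & (0:K) = 0] by apply: Hv; rewrite scale0r addr0.
by case: nab.
Qed.

Lemma Xuniq (X : V -> Prop) : subspace X -> distant X U' ->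
  forall a l c c', X (a + c *: l) -> X (a + c' *: l) -> U' l -> l != 0 -> c = c'.
Proof.
move=> sX dX a l c c' H1 H2 Hl ln.
have E : (c - c') *: l = 0.
  apply: dX.1.
    have := sub_sub sX H1 H2.
    by rewrite opprD addrACA subrr add0r scalerBl.
  exact: subZ.
by apply/eqP; rewrite -subr_eq0; apply/eqP; apply: (scale_eq0l ln).
Qed.

Lemma Xpair (X : V -> Prop) : subspace X -> distant X U' ->
  forall p q cp cq cpq, U p -> U q -> indep p q ->
  X (p + cp *: lam p) -> X (q + cq *: lam q) -> X ((p + q) + cpq *: lam (p + q)) -> cp = cq.
Proof.
move=> sX dX p q cp cq cpq Hp Hq ind H1 H2 H3.
have Hz : X ((p + q + cpq *: lam (p + q)) - (p + cp *: lam p) - (q + cq *: lam q)).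
  by apply: (sub_sub sX) => //; apply: (sub_sub sX).
have Ez : (p + q + cpq *: lam (p + q)) - (p + cp *: lam p) - (q + cq *: lam q)
          = lam ((cpq - cp) *: p + (cpq - cq) *: q).
  rewrite lamD // scalerDr grp_id lamD; try exact: subZ.
  by rewrite !lamZ // !scalerBl.
rewrite Ez in Hz.
have Hl : U ((cpq - cp) *: p + (cpq - cq) *: q) by apply: (subD sU); apply: (subZ sU).
have z0 : lam ((cpq - cp) *: p + (cpq - cq) *: q) = 0 by apply: dX.1 => //; apply: lamU.
have [h1 h2] : cpq - cp = 0 /\ cpq - cq = 0.
  apply: ind; apply: lam_inj => //; first exact: sub0.
  by rewrite z0 lam0.
by move/eqP: h1; move/eqP: h2; rewrite !subr_eq0 => /eqP <- /eqP <-.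
Qed.

Lemma c0 : central (0 : K). Proof. by move=> k; rewrite mul0r mulr0. Qed.
Lemma c1 : central (1 : K). Proof. by move=> k; rewrite mul1r mulr1. Qed.
Lemma n10 : ~ ((1 : K) = 0 /\ (0 : K) = 0). Proof. by case=> /eqP; rewrite oner_eq0. Qed.
Lemma n01 : ~ ((0 : K) = 0 /\ (1 : K) = 0). Proof. by case=> _ /eqP; rewrite oner_eq0. Qed.
Lemma n11 : ~ ((1 : K) = 0 /\ (1 : K) = 0). Proof. by case=> /eqP; rewrite oner_eq0. Qed.

Lemma TfamU : Tfam U. Proof. by exists 1, 0; split; [exact: c1|exact: c0|exact: n10|rewrite Tset10]. Qed.
Lemma TfamU' : Tfam U'. Proof. by exists 0, 1; split; [exact: c0|exact: c1|exact: n01|rewrite Tset01]. Qed.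
Lemma Tfam11 : Tfam (Tset U lam 1 1). Proof. by exists 1, 1; split; [exact: c1|exact: c1|exact: n11|]. Qed.

Lemma distinct3 u0 : U u0 -> u0 != 0 ->
  [/\ U <> U', U' <> Tset U lam 1 1 & U <> Tset U lam 1 1].
Proof.
move=> Hu0 u0n.
have lu0 := lam_nz Hu0 u0n.
have Tm : Tset U lam 1 1 (u0 + lam u0) by exists u0; rewrite !scale1r.
split.
- move=> E; move/eqP: u0n; apply; apply: HUU'.1 => //; by rewrite -E.
- move=> E; rewrite -E in Tm; move/eqP: u0n; apply; apply: HUU'.1 => //.
  by have := sub_sub sU' Tm (lamU Hu0); rewrite addrK.
- move=> E; rewrite -E in Tm; move/eqP: lu0; apply; apply: HUU'.1; last exact: lamU.
  by have := sub_sub sU Tm Hu0; rewrite addrC addKr.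
Qed.

Lemma R1_T (HdimV : dim_gt2 V) : R1 Tfam.
Proof.
split.
  move=> X Y [x [y [cx cy nxy ->]]] [x' [y' [cx' cy' nxy' ->]]] ne.
  exact: (Tset_dist cx cy cx' cy' (Tneq_det cx cy cx' cy' nxy nxy' ne)).
have [p [q [Hp _ ind]]] := indep_U HdimV.
have [pn _] := indep_nz ind.
have [d1 d2 d3] := distinct3 Hp pn.
exists U, U', (Tset U lam 1 1); split => //; [exact: TfamU|exact: TfamU'|exact: Tfam11].
Qed.

Lemma inG_T (HU' : inG U') X : Tfam X -> inG X.
Proof. by move=> [x [y [cx cy nxy ->]]]; apply: Tset_inG. Qed.

Lemma R3_T (HdimV : dim_gt2 V) :
  ~ (exists S' : (V -> Prop) -> Prop,
      [/\ (forall X, S' X -> inG X), R1 S', R2 S',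
          (forall X, Tfam X -> S' X) & exists X, S' X /\ ~ Tfam X]).
Proof.
move=> [S' [GS [R1d _] R2S sub [X [SX nTX]]]].
have [u0 [v0 [Hu0 Hv0 ind]]] := indep_U HdimV.
have [u0n v0n] := indep_nz ind.
have [d1 d2 d3] := distinct3 Hu0 u0n.
have sX : subspace X by case: (GS _ SX).
have XU' : X <> U' by move=> E; apply: nTX; rewrite E; exact: TfamU'.
have XU : X <> U by move=> E; apply: nTX; rewrite E; exact: TfamU.
have XT : X <> Tset U lam 1 1 by move=> E; apply: nTX; rewrite E; exact: Tfam11.
have dX : distant X U' := R1d X U' SX (sub _ TfamU') XU'.
have key : forall u, U u -> u != 0 -> exists c, X (u + c *: lam u).
  move=> u Hu un.
  have lun := lam_nz Hu un.
  have lineL : line (sp2 u (lam u)).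
    exists u, (lam u); split=> // a b E.
    have [e1 e2] := dir0 (subZ sU a Hu) (subZ sU' b (lamU Hu)) E.
    by split; [exact: (scale_eq0l un) | exact: (scale_eq0l lun)].
  have mX : meet (sp2 u (lam u)) X.
    apply: (R2S _ lineL) => //.
    exists U, U', (Tset U lam 1 1); split.
    - exact: sub TfamU.
    - exact: sub TfamU'.
    - exact: sub Tfam11.
    - by split.
    - split.
      + by exists u; split => //; exact: sp2_1.
      + by exists (lam u); split => //; [exact: sp2_2 | exact: lamU].
      + exists (u + lam u); split.
        * by have := T_nz (x:=1) (y:=1) Hu un n11; rewrite !scale1r.
        * apply: sp2D; [exact: sp2_1 | exact: sp2_2].
        * by exists u; rewrite !scale1r.
  case: mX => w [wn [a [b Ew]] Xw].
  case: (eqVneq a 0) => [a0|an].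
    move/eqP: wn; case; apply: dX.1 => //.
    by rewrite Ew a0 scale0r add0r; apply: (subZ sU'); apply: lamU.
  exists (a^-1 * b).
  have -> : u + (a^-1 * b) *: lam u = a^-1 *: w by rewrite Ew scalerDr !scalerA unitK // scale1r.
  exact: subZ.
have [c Hc] := key u0 Hu0 u0n.
have [cv Hcv] := key v0 Hv0 v0n.
have [pn qn] := indep_nz ind.
have sumn : u0 + v0 != 0.
  apply/eqP => E; move: (ind 1 1); rewrite !scale1r E => /(_ erefl) [/eqP].
  by rewrite oner_eq0.
have [cs Hcs] := key (u0 + v0) (subD sU Hu0 Hv0) sumn.
have ccv : c = cv := Xpair sX dX Hu0 Hv0 ind Hc Hcv Hcs.
have cc : central c.
  move=> k; case: (eqVneq k 0) => [->|kn]; first by rewrite mulr0 mul0r.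
  have Hk : U (k *: u0) by exact: subZ.
  have indk : indep (k *: u0) v0.
    move=> a b E; have [a0 b0] : a * k = 0 /\ b = 0 by apply: ind; rewrite -scalerA.
    split=> //; apply/eqP; rewrite -[a]mulr1 -(unitKr kn) mulrA a0 mul0r //.
  have [kn0 _] := indep_nz indk.
  have [ck Hck] := key _ Hk kn0.
  have kvn : k *: u0 + v0 != 0.
    apply/eqP => E; move: (indk 1 1); rewrite !scale1r E => /(_ erefl) [/eqP].
    by rewrite oner_eq0.
  have [cs' Hcs'] := key (k *: u0 + v0) (subD sU Hk Hv0) kvn.
  have ckv : ck = cv := Xpair sX dX Hk Hv0 indk Hck Hcv Hcs'.
  have H1 : X (k *: u0 + (k * c) *: lam u0).
      by have := subZ sX k Hc; rewrite scalerDr scalerA.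
  have H2 : X (k *: u0 + (ck * k) *: lam u0) by move: Hck; rewrite lamZ // scalerA.
  have := Xuniq sX dX H1 H2 (lamU Hu0) (lam_nz Hu0 u0n).
  by rewrite ckv -ccv => ->.
have TX : Tfam (Tset U lam 1 c) by exists 1, c; split=> //; [exact: c1 | case=> /eqP; rewrite oner_eq0].
case: (classic (X = Tset U lam 1 c)) => [E|ne]; first by apply: nTX; rewrite E.
have dd := R1d X _ SX (sub _ TX) ne.
have n1c : ~ ((1 : K) = 0 /\ c = 0) by case=> /eqP; rewrite oner_eq0.
have := T_nz Hu0 u0n n1c; rewrite scale1r => /eqP; apply.
by apply: dd.1 => //; exists u0; rewrite scale1r.
Qed.

Lemma Phi_one x y : Phi U lam (rowmul (rscal x) (rscal y) (@mx2_one K V)) = Tset U lam x y.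
Proof.
apply: pred_ext => w; rewrite /Phi /rowmul /radd /rmul /rscal /rone /rzero /=.
split; case=> u [Hu ->]; exists u; split=> //.
  by rewrite !addr0 add0r lamZ.
by rewrite !addr0 add0r lamZ.
Qed.

Lemma endo_one : endo U (@rone K V).
Proof. by split. Qed.

Lemma endo_zero : endo U (@rzero K V).
Proof. split=> //; [by move=> *; exact: sub0 | by move=> *; rewrite addr0 | by move=> *; rewrite scaler0]. Qed.

Lemma GL2_one : GL2 U (@mx2_one K V).
Proof.
have He : mx2_endo U (@mx2_one K V) by split; [exact: endo_one|exact: endo_zero|exact: endo_zero|exact: endo_one].
split=> //; exists (@mx2_one K V); split=> //;
  by split=> u Hu; rewrite /= /radd /rmul /rone /rzero ?addr0 ?add0r.
Qed.
End Main.

Theorem proposition4p4 (K : unitRingType) (V : lmodType K)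
  (HK : division_ring K) (HdimV : dim_gt2 V)
  (U U' : V -> Prop) (HU : inG U) (HU' : inG U') (HUU' : distant U U')
  (lam : V -> V) (Hlam : lin_iso U U' lam) :
  let T : (V -> Prop) -> Prop := fun X =>
    exists x y : K, [/\ central x, central y, ~ (x = 0 /\ y = 0) & X = Tset U lam x y] in
  (exists M : mx2 V, GL2 U M /\ T = Phi_zchain U lam M) /\ regulus T.
Proof.
move=> T.
have sU := HU.1; have sU' := HU'.1.
have -> : T = Tfam U lam by [].
split.
  exists (@mx2_one K V); split; first exact: (GL2_one sU).
  apply: pred_ext => X; split; case=> x [y [cx cy nxy ->]]; exists x, y; split=> //;
    by rewrite (Phi_one Hlam).
split.
- move=> X; exact: (inG_T HK sU sU' HUU' Hlam HU').
- exact: (R1_T HK sU sU' HUU' Hlam HdimV).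
- exact: (R2_T HK sU sU' HUU' Hlam).
- exact: (R3_T HK sU sU' HUU' Hlam HdimV).
Qed.
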